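(* Assume the bounded-cost assumption. Let agent $j\in[J]$ use POMWU with learning rate $\eta>0$, and let the contexts $Z_1,\dots,Z_T$, the predictions $\hat Z^j_1,\dots,\hat Z^j_T$ and the other agents' strategies be arbitrary. Then $$\mathrm{Reg}^j_T\le\frac{(5+\ln K)L^j_T+m\ln K}{\eta}+\eta\Big(\sum_{z\in\mathcal Z}\sum_{i=1}^{n_z}\big\|(\Phi^j_{z,i}-\Phi^j_{z,i-1})^\top z\big\|_\infty^2+4L^j_T\Big)-\frac{1}{16\eta}\sum_{z\in\mathcal Z}\sum_{i=1}^{n_z}\big\|w^j_{z,i}-w^j_{z,i-1}\big\|_1^2 .$$
   Context: Setting. There are $J\ge1$ agents indexed by $j\in[J]$. Agent $j$ has a finite action set $\mathcal A^j=\{a^j_1,\dots,a^j_K\}$ with $K$ elements; $\mathcal A=\prod_i\mathcal A^i$, $\mathcal A^{-j}=\prod_{i\ne j}\mathcal A^i$. $\Delta_K$ is the probability simplex in $\mathbb R^K$, $w\in\Delta_K$ identified with a distribution on $\mathcal A^j$; $\mathscr P(S)$ is the set of distributions on a finite set $S$. The context set $\mathcal Z=\{z_1,\dots,z_m\}\subset\mathbb R^d$ is finite with $m$ elements. Agent $j$ has $\phi^j:\mathcal A\to\mathbb R^d$ and cost $c^j(\mathbf w,Z)=\mathbb E_{\mathbf a\sim\mathbf w}[\langle\phi^j(\mathbf a),Z\rangle]$; $c^j(w,\mathbf w^{-j},Z)=c^j(w\otimes\mathbf w^{-j},Z)$. $\Phi^j(\mathbf w^{-j})\in\mathbb R^{d\times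 K}$ has entries $\Phi^j(\mathbf w^{-j})_{\ell,k}=\mathbb E_{\mathbf a^{-j}\sim\mathbf w^{-j}}[\phi^j(a^j_k,\mathbf a^{-j})[\ell]]$, so $c^j(w,\mathbf w^{-j},Z)=\langle Z,\Phi^j(\mathbf w^{-j})w\rangle$. Bounded-cost assumption: $|\langle Z,\phi^j(\mathbf a)\rangle|\le1$ for all $j,\mathbf a\in\mathcal A,Z\in\mathcal Z$. Game protocol: $T$ rounds, fixed sequence $Z_1,\dots,Z_T\in\mathcal Z$; at round $t$ each agent $j$ receives a prediction $\hat Z^j_t\in\mathcal Z$, plays $w^j_t\in\Delta_K$ as a function of past feedback and $\hat Z^j_t$, incurs $c^j(w^j_t,\mathbf w^{-j}_t,Z_t)$ with $\mathbf w^{-j}_t=\bigotimes_{i\ne j}w^i_t$, and observes $Z_t$ and $\Phi^j(\mathbf w^{-j}_t)$. $\mathscr T^z=\{t:Z_t=z\}=\{t^z_1<\dots<t^z_{n_z}\}$, $n_z=|\mathscr T^z|$; $L^j_T=\sum_{t=1}^T\mathbf 1\{\hat Z^j_t\ne Z_t\}$. Contextual external regret: $\mathrm{Reg}^j_T=\sum_{t=1}^Tc^j(w^j_t,\mathbf w^{-j}_t,Z_t)-\min_{\pi:\mathcal Z\to\Delta_K}\sum_{t=1}^Tc^j(\pi(Z_t),\mathbf w^{-j}_t,Z_t)$. POMWU with learning rate $\eta>0$ (for agent $j$): maintain for each $z\in\mathcal Z$ a vector $\rho_z\in\mathbb R^K_{>0}$, initialized to $(1/K,\dots,1/K)$, and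 a matrix $\Psi_z\in\mathbb R^{d\times K}$, initialized to $0$. At round $t$, with $\hat Z=\hat Z^j_t$, play $w^j_t[\ell]=\rho_{\hat Z}[\ell]\exp(-\eta(\Psi_{\hat Z}^\top\hat Z)[\ell])/\sum_{k=1}^K\rho_{\hat Z}[k]\exp(-\eta(\Psi_{\hat Z}^\top\hat Z)[k])$. After observing $Z_t$ and $\Phi_t=\Phi^j(\mathbf w^{-j}_t)$, set $\Psi_{Z_t}\leftarrow\Phi_t$ and $\rho_{Z_t}[\ell]\leftarrow\rho_{Z_t}[\ell]\exp(-\eta(\Phi_t^\top Z_t)[\ell])$ for all $\ell$. Notation: $\Phi^j_{z,i}=\Phi^j(\mathbf w^{-j}_{t^z_i})$, $w^j_{z,i}=w^j_{t^z_i}$ for $1\le i\le n_z$, with conventions $\Phi^j_{z,0}=0\in\mathbb R^{d\times K}$ and $w^j_{z,0}=(1/K,\dots,1/K)$. *)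

(* Defs.v *)
From HB Require Import structures.
From mathcomp Require Import all_boot all_order all_algebra.
From mathcomp Require Import boolp classical_sets reals sequences exp.
Set Implicit Arguments. Unset Strict Implicit. Unset Printing Implicit Defensive.
Import Order.TTheory GRing.Theory Num.Theory.
Local Open Scope ring_scope.
Local Open Scope classical_set_scope.

Definition simplex (R : numDomainType) (K : nat) (w : 'cV[R]_K) : Prop :=
  (forall k, 0 <= w k 0) /\ \sum_(k < K) w k 0 = 1.

Definition dotc (R : numDomainType) (n : nat) (u v : 'cV[R]_n) : R :=
  \sum_(i < n) u i 0 * v i 0.

Definition normInf (R : numDomainType) (n : nat) (v : 'cV[R]_n) : R :=
  \big[Num.max/0]_(i < n) `|v i 0|.
Definition norm1 (R : numDomainType) (n : nat) (v : 'cV[R]_n) : R :=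
  \sum_(i < n) `|v i 0|.

Definition unif (R : numFieldType) (K : nat) : 'cV[R]_K := const_mx (K%:R^-1).

Definition with_j (R : numDomainType) (J K : nat) (j : 'I_J) (w : 'cV[R]_K)
  (W : 'I_J -> 'cV[R]_K) : 'I_J -> 'cV[R]_K :=
  fun i => if i == j then w else W i.

(* Cost c^j(w, Z) = E_{a ~ (x)_i W i}[ <phi^j(a), Z> ], joint actions a : 'I_J -> 'I_K. *)
Definition cost (R : numDomainType) (J K d : nat)
  (phij : {ffun 'I_J -> 'I_K} -> 'cV[R]_d) (W : 'I_J -> 'cV[R]_K) (z : 'cV[R]_d) : R :=
  \sum_(a : {ffun 'I_J -> 'I_K}) (\prod_(i < J) W i (a i) 0) * dotc z (phij a).

(* Phi^j(w^{-j})_{l,k} = E_{a^{-j} ~ w^{-j}} [ phi^j(a^j_k, a^{-j})[l] ]: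
   joint actions a with a j = k, weighted by the product over i <> j. *)
Definition PhiM (R : numDomainType) (J K d : nat) (j : 'I_J)
  (phij : {ffun 'I_J -> 'I_K} -> 'cV[R]_d) (W : 'I_J -> 'cV[R]_K) : 'M[R]_(d, K) :=
  \matrix_(l < d, k < K)
    \sum_(a : {ffun 'I_J -> 'I_K} | a j == k) (\prod_(i < J | i != j) W i (a i) 0) * phij a l 0.

(* POMWU state after t rounds (rounds indexed 0,1,...): for each context index z,
   the vector rho_z and the matrix Psi_z. Contexts are indices into zs : 'I_m -> R^d. *)
Fixpoint pomwu_state (R : realType) (K d m : nat) (eta : R) (zs : 'I_m -> 'cV[R]_d)
  (Z : nat -> 'I_m) (Phi : nat -> 'M[R]_(d, K)) (t : nat)
  : ('I_m -> 'cV[R]_K) * ('I_m -> 'M[R]_(d, K)) :=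
  match t with
  | 0 => (fun _ => unif R K, fun _ => 0)
  | t'.+1 =>
      let st := pomwu_state eta zs Z Phi t' in
      (fun z => if z == Z t' then
                  \col_(l < K) (st.1 z l 0 * expR (- eta * ((Phi t')^T *m zs (Z t')) l 0))
                else st.1 z,
       fun z => if z == Z t' then Phi t' else st.2 z)
  end.

Definition pomwu_play (R : realType) (K d m : nat) (eta : R) (zs : 'I_m -> 'cV[R]_d)
  (Z Zhat : nat -> 'I_m) (Phi : nat -> 'M[R]_(d, K)) (t : nat) : 'cV[R]_K :=
  let st := pomwu_state eta zs Z Phi t in
  let zh := Zhat t in
  let u := \col_(l < K) (st.1 zh l 0 * expR (- eta * ((st.2 zh)^T *m zs zh) l 0)) in
  (\sum_(k < K) u k 0)^-1 *: u.

(* T^z = {t < T : Z_t = z} listed increasingly: t^z_1 < ... < t^z_{n_z}. *)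
Definition occ (m : nat) (Z : nat -> 'I_m) (T : nat) (z : 'I_m) : seq nat :=
  [seq t <- iota 0 T | Z t == z].

(* Phi_{z,i} (i = 0 gives the zero matrix) and w_{z,i} (i = 0 gives uniform). *)
Definition PhiZ (R : numDomainType) (K d m : nat) (Phi : nat -> 'M[R]_(d, K))
  (Z : nat -> 'I_m) (T : nat) (z : 'I_m) (i : nat) : 'M[R]_(d, K) :=
  if i is i'.+1 then Phi (nth 0%N (occ Z T z) i') else 0.
Definition wZ (R : numFieldType) (K m : nat) (w : nat -> 'cV[R]_K)
  (Z : nat -> 'I_m) (T : nat) (z : 'I_m) (i : nat) : 'cV[R]_K :=
  if i is i'.+1 then w (nth 0%N (occ Z T z) i') else unif R K.

Definition Lmiss (R : numDomainType) (m : nat) (Z Zhat : nat -> 'I_m) (T : nat) : R :=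
  \sum_(t < T) (Zhat t != Z t)%:R.

Definition regret (R : realType) (J K d m : nat) (j : 'I_J)
  (phij : {ffun 'I_J -> 'I_K} -> 'cV[R]_d) (zs : 'I_m -> 'cV[R]_d) (Z : nat -> 'I_m)
  (W : nat -> 'I_J -> 'cV[R]_K) (w : nat -> 'cV[R]_K) (T : nat) : R :=
  \sum_(t < T) cost phij (with_j j (w t) (W t)) (zs (Z t))
  - inf [set \sum_(t < T) cost phij (with_j j (pi (Z t)) (W t)) (zs (Z t))
         | pi in [set pi : 'I_m -> 'cV[R]_K | forall z, simplex (pi z)]].

(* Main.v *)
Require Import Defs.
From HB Require Import structures.
From mathcomp Require Import all_boot all_order all_algebra.
From mathcomp Require Import boolp classical_sets reals sequences exp.
From mathcomp Require Import topology normedtype derive realfun.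
From mathcomp Require Import ring lra.
Set Implicit Arguments. Unset Strict Implicit. Unset Printing Implicit Defensive.
Import Order.TTheory GRing.Theory Num.Theory numFieldNormedType.Exports.
Local Open Scope ring_scope.
Local Open Scope classical_set_scope.

Section Calc.
Variable R : realType.
Definition hh (y : R) := ln y - (5*y^+2 - 4*y - 1) * (2*y^+2 + 4*y)^-1.
Lemma hh_der (x : R) : 0 < x -> is_derive x 1 hh ((x-1)^+3 / (x^+2 * (x+2)^+2)).
Proof.
move=> x0.
have q0 : 2*x^+2 + 4*x != 0 by apply: lt0r_neq0; nra.
rewrite /hh.
apply: is_derive_eq.
  apply: (@is_deriveB _ _ _ (@ln R) (fun y => (5*y^+2 - 4*y - 1) * (2*y^+2 + 4*y)^-1)).
  exact: is_derive1_ln.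
rewrite /= /GRing.scale /=.
have xn : x != 0 by apply: lt0r_neq0.
have x2 : x + 2 != 0 by apply: lt0r_neq0; lra.
field. by rewrite xn x2 q0.
Qed.

Lemma hh_derivable (x : R) : 0 < x -> derivable hh x 1.
Proof. by move=> /hh_der [] . Qed.

Lemma hh_derive1 (x : R) : 0 < x -> derive1 hh x = (x-1)^+3 / (x^+2 * (x+2)^+2).
Proof. by move=> /hh_der H; rewrite derive1E derive_val. Qed.

Lemma hh_cont (a b : R) : 0 < a -> {within `[a, b], continuous hh}.
Proof.
move=> a0; apply: derivable_within_continuous => x.
rewrite in_itv /= => /andP[ax _]; apply: hh_derivable; exact: lt_le_trans ax.
Qed.


Lemma hh1 : hh 1 = 0.
Proof. by rewrite /hh ln1; field. Qed.

Lemma hh_ge0 (x : R) : 0 < x -> 0 <= hh x.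
Proof.
move=> x0; rewrite -hh1.
have [x1|x1] := lerP x 1.
  apply: (@ler0_derive1_nincr R hh x 1) => //.
  - move=> y; rewrite in_itv /= => /andP[xy _]; apply: hh_derivable; exact: lt_trans xy.
  - move=> y; rewrite in_itv /= => /andP[xy y1].
    have y0 : 0 < y by exact: lt_trans xy.
    rewrite hh_derive1 // pmulr_lle0 ?invr_gt0; last first.
      by apply: mulr_gt0; apply: exprn_gt0; lra.
    have : 0 <= (1 - y)^+3 by apply: exprn_ge0; lra.
    by rewrite -[1 - y]opprB exprNn; nra.
  - exact: hh_cont.
apply: (@ger0_derive1_ndecr R hh 1 x) => //.
- move=> y; rewrite in_itv /= => /andP[xy _]; apply: hh_derivable; lra.
- move=> y; rewrite in_itv /= => /andP[xy y1].
  rewrite hh_derive1; last lra.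
  apply: divr_ge0; first by apply: exprn_ge0; lra.
  by apply: mulr_ge0; apply: exprn_ge0; lra.
- exact: hh_cont.
- exact: ltW.
Qed.

Lemma pinsker_pt (p q : R) : 0 < p -> 0 < q ->
  3 * (p - q)^+2 / (2 * (p + 2 * q)) <= p * ln (p / q) - p + q.
Proof.
move=> p0 q0.
have x0 : 0 < p / q by apply: divr_gt0.
have := @hh_ge0 (p / q) x0; rewrite /hh subr_ge0 => H.
have H2 := ler_wpM2l (ltW p0) H.
apply: le_trans (lerD (lerD H2 (lexx (-p))) (lexx q)).
rewrite le_eqVlt; apply/orP; left; apply/eqP.
have qn : q != 0 by apply: lt0r_neq0.
have pn : p != 0 by apply: lt0r_neq0.
have s0 : p + 2 * q != 0 by apply: lt0r_neq0; lra.
field. rewrite qn s0 andbT /=; apply: lt0r_neq0; nra.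
Qed.
End Calc.

Section Gibbs.
Variable R : realType.
Variable K : nat.

Definition dot (u v : 'I_K -> R) := \sum_k u k * v k.
Definition n1 (v : 'I_K -> R) := \sum_k `|v k|.
Definition ninf (v : 'I_K -> R) := \big[Num.max/0]_k `|v k|.

Lemma le_bigmax_seq (r : seq 'I_K) (F : 'I_K -> R) j : j \in r ->
  F j <= \big[Num.max/0]_(i <- r) F i.
Proof.
elim: r => [//|a r IH]; rewrite inE big_cons => /orP[/eqP->|jr].
  by rewrite le_max lexx.
by rewrite le_max (IH jr) orbT.
Qed.

Lemma ninf_ge (v : 'I_K -> R) k : `|v k| <= ninf v.
Proof. by apply: le_bigmax_seq; rewrite mem_index_enum. Qed.

Lemma ninf_ge0 (v : 'I_K -> R) : 0 <= ninf v.
Proof. by rewrite /ninf; elim/big_ind: _ => // x y hx hy; rewrite le_max hx. Qed.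

Lemma ninf_le (v : 'I_K -> R) c : 0 <= c -> (forall k, `|v k| <= c) -> ninf v <= c.
Proof. by move=> c0 H; rewrite /ninf; elim/big_ind: _ => // x y hx hy; rewrite ge_max hx. Qed.

Lemma holder (u v : 'I_K -> R) : dot u v <= n1 u * ninf v.
Proof.
rewrite /dot /n1 mulr_suml; apply: ler_sum => k _.
apply: le_trans (ler_norm _) _; rewrite normrM.
by apply: ler_wpM2l => //; apply: ninf_ge.
Qed.

Lemma n1_triangle (u v : 'I_K -> R) : n1 (fun k => u k + v k) <= n1 u + n1 v.
Proof. by rewrite /n1 -big_split /=; apply: ler_sum => k _; apply: ler_normD. Qed.

Lemma n1_ge0 (u : 'I_K -> R) : 0 <= n1 u.
Proof. by apply: sumr_ge0. Qed.

Lemma cauchy_schwarz (a c : 'I_K -> R) : (forall k, 0 < c k) ->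
  (\sum_k `|a k|)^+2 <= (\sum_k a k ^+2 / c k) * \sum_k c k.
Proof.
move=> c0.
set S := \sum_k `|a k|; set Q := \sum_k a k ^+2 / c k; set C := \sum_k c k.
have C0 : 0 <= C by apply: sumr_ge0 => k _; apply: ltW.
have H : 0 <= \sum_k (`|a k| * C - S * c k)^+2 / c k.
  by apply: sumr_ge0 => k _; apply: divr_ge0; [apply: sqr_ge0| apply: ltW].
have E : \sum_k (`|a k| * C - S * c k)^+2 / c k =
         C^+2 * Q - 2 * C * S * S + S^+2 * C.
  rewrite (eq_bigr (fun k => C^+2 * (a k^+2/c k) - (2*C*S) * `|a k| + S^+2 * c k)); last first.
    move=> k _; have ck : c k != 0 by apply: lt0r_neq0.
    rewrite -[a k ^+2]real_normK ?num_real //.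
    by field.
  by rewrite big_split sumrB /= -!mulr_sumr.
rewrite E in H.
have [Cp0|Cp] := eqVneq C 0.
  have -> : S = 0.
    rewrite /S big1 // => k _; exfalso.
    have : c k <= C.
      rewrite /C (bigD1 k) //= lerDl; apply: sumr_ge0 => i _; apply: ltW; exact: c0.
    by rewrite Cp0; have := c0 k; lra.
  by rewrite expr0n /= Cp0 mulr0.
have Cg : 0 < C by rewrite lt_def Cp C0.
rewrite mulrC.
have : 0 <= C * (C * Q - S^+2) by nra.
by rewrite pmulr_rge0 // subr_ge0.
Qed.
End Gibbs.

Section Gibbs2.
Variable R : realType.
Variable K : nat.
Hypothesis K0 : (0 < K)%N.
Variable eta : R.
Hypothesis eta0 : 0 < eta.

Definition Zs (G : 'I_K -> R) := \sum_k expR (- eta * G k).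
Definition gb (G : 'I_K -> R) := fun k => expR (- eta * G k) / Zs G.
Definition Pot (G : 'I_K -> R) := - ln (Zs G) / eta.
Definition kl (p q : 'I_K -> R) := \sum_k p k * ln (p k / q k).

Lemma Zs_gt0 G : 0 < Zs G.
Proof.
rewrite /Zs (bigD1 (Ordinal K0)) //=.
have := expR_gt0 (- eta * G (Ordinal K0)).
have : 0 <= \sum_(i < K | i != Ordinal K0) expR (- eta * G i).
  by apply: sumr_ge0 => i _; apply: expR_ge0.
lra.
Qed.

Lemma gb_gt0 G k : 0 < gb G k.
Proof. by apply: divr_gt0; [apply: expR_gt0| apply: Zs_gt0]. Qed.

Lemma gb_sum G : \sum_k gb G k = 1.
Proof.
rewrite /gb -mulr_suml divff //; exact: lt0r_neq0 (Zs_gt0 G).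
Qed.

Lemma bregman A B :
  Pot B = Pot A + dot (gb A) (fun k => B k - A k) - kl (gb A) (gb B) / eta.
Proof.
have ZA := Zs_gt0 A; have ZB := Zs_gt0 B.
have E : kl (gb A) (gb B) = eta * dot (gb A) (fun k => B k - A k) + (ln (Zs B) - ln (Zs A)).
  rewrite /kl /dot mulr_sumr.
  rewrite -[X in _ = _ + X]mul1r -(gb_sum A) mulr_suml -big_split /=.
  apply: eq_bigr => k _.
  have -> : gb A k / gb B k = expR (eta * (B k - A k)) * (Zs B / Zs A).
    have -> : eta * (B k - A k) = - eta * A k - (- eta * B k) by ring.
    rewrite /gb expRB.
    have h1 := lt0r_neq0 ZA; have h2 := lt0r_neq0 ZB.
    have h3 := lt0r_neq0 (expR_gt0 (- eta * B k)).
    field; by rewrite h1 h2 h3.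
  rewrite lnM ?posrE ?expR_gt0 ?divr_gt0 // expRK ln_div ?posrE //.
  by ring.
rewrite E /Pot.
have en := lt0r_neq0 eta0.
by field.
Qed.

Lemma pinsker (p q : 'I_K -> R) : (forall k, 0 < p k) -> (forall k, 0 < q k) ->
  \sum_k p k = 1 -> \sum_k q k = 1 ->
  n1 (fun k => p k - q k) ^+ 2 / 2 <= kl p q.
Proof.
move=> p0 q0 sp sq.
have E : kl p q = \sum_k (p k * ln (p k / q k) - p k + q k).
  rewrite big_split /= sumrB sp sq /kl; ring.
rewrite E.
apply: le_trans (ler_sum _ (fun k _ => pinsker_pt (p0 k) (q0 k))).
have c0 : forall k, 0 < p k + 2 * q k by move=> k; have := p0 k; have := q0 k; lra.
have := cauchy_schwarz (fun k => p k - q k) c0.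
have -> : \sum_k (p k + 2 * q k) = 3.
  by rewrite big_split /= -mulr_sumr sp sq; ring.
have -> : \sum_k 3 * (p k - q k) ^+ 2 / (2 * (p k + 2 * q k)) =
          3 / 2 * \sum_k (p k - q k) ^+ 2 / (p k + 2 * q k).
  rewrite mulr_sumr; apply: eq_bigr => k _.
  have := lt0r_neq0 (c0 k) => h; field; by rewrite h.
rewrite /n1; lra.
Qed.


Lemma amgm (a D : R) : a * D <= eta * D ^+ 2 + a ^+ 2 / (4 * eta).
Proof.
have en := lt0r_neq0 eta0.
rewrite -subr_ge0.
have -> : eta * D ^+ 2 + a ^+ 2 / (4 * eta) - a * D = (2 * eta * D - a) ^+ 2 / (4 * eta).
  by field.
by apply: divr_ge0; [apply: sqr_ge0| apply: mulr_ge0 => //; apply: ltW].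
Qed.

Lemma div_eta_le (a b : R) : a <= b -> a / eta <= b / eta.
Proof. by move=> ab; apply: ler_wpM2r => //; rewrite invr_ge0 ltW. Qed.

Lemma step (G M l x g g' : 'I_K -> R) :
  x = gb (fun k => G k + M k) ->
  g = gb (fun k => G k + l k) ->
  g' = gb G ->
  dot l x + n1 (fun k => x k - g k) ^+ 2 / (4 * eta)
          + n1 (fun k => x k - g' k) ^+ 2 / (2 * eta)
  <= Pot (fun k => G k + l k) - Pot G + eta * ninf (fun k => l k - M k) ^+ 2.
Proof.
move=> ex eg eg'.
have b1 := bregman (fun k => G k + l k) (fun k => G k + M k).
have b2 := bregman (fun k => G k + M k) G.
rewrite -ex -eg -eg' in b1 b2.
have E1 : dot g (fun k => (G k + M k) - (G k + l k)) = dot g M - dot g l.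
  by rewrite /dot -sumrB; apply: eq_bigr => k _; ring.
have E2 : dot x (fun k => G k - (G k + M k)) = - dot x M.
  by rewrite /dot -sumrN; apply: eq_bigr => k _; ring.
have E3 : dot (fun k => x k - g k) (fun k => l k - M k) =
          dot x l - dot x M - dot g l + dot g M.
  rewrite /dot -!sumrB -big_split /=; apply: eq_bigr => k _; ring.
rewrite E1 in b1; rewrite E2 in b2.
have F1 := holder (fun k => x k - g k) (fun k => l k - M k).
rewrite E3 in F1.
set a := n1 (fun k => x k - g k) in F1 *.
set b := n1 (fun k => x k - g' k).
set D := ninf (fun k => l k - M k) in F1 *.
have F2 := amgm a D.
have P1 : a ^+ 2 / 2 <= kl g x.
  have -> : a = n1 (fun k => g k - x k).
    by rewrite /a /n1; apply: eq_bigr => k _; rewrite distrC.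
  by apply: pinsker => //; rewrite ?ex ?eg ?eg'; (exact: gb_gt0 || exact: gb_sum).
have P2 : b ^+ 2 / 2 <= kl x g'.
  by apply: pinsker => //; rewrite ?ex ?eg ?eg'; (exact: gb_gt0 || exact: gb_sum).
have F3 := div_eta_le P1; have F4 := div_eta_le P2.
have en := lt0r_neq0 eta0.
have E4 : a ^+ 2 / 2 / eta = a ^+ 2 / (2 * eta) by field.
have E5 : b ^+ 2 / 2 / eta = b ^+ 2 / (2 * eta) by field.
rewrite E4 in F3; rewrite E5 in F4.
have : a ^+ 2 / (4 * eta) + a ^+ 2 / (4 * eta) = a ^+ 2 / (2 * eta) by field.
move=> E6.
have T1 : dot x l <= dot x M + dot g l - dot g M + a*D by lra.
have T2 : Pot (fun k => G k + l k) - Pot G = dot x M + dot g l - dot g M + kl g x / eta + kl x g' / eta by lra.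
have T3 : dot x l + a ^+ 2 / (4 * eta) + b ^+ 2 / (2 * eta) <= dot x M + dot g l - dot g M + eta * D ^+ 2 + a ^+ 2 / (2 * eta) + b ^+ 2 / (2 * eta) by lra.
have Ec : dot l x = dot x l by rewrite /dot; apply: eq_bigr => k _; rewrite mulrC.
rewrite Ec; lra.
Qed.

Lemma gb_ext (F G : 'I_K -> R) : (forall k, F k = G k) -> gb F = gb G.
Proof. by move=> H; rewrite (funext H). Qed.

Lemma Pot_le (G : 'I_K -> R) k : Pot G <= G k.
Proof.
have Z0 := Zs_gt0 G.
have H : expR (- eta * G k) <= Zs G.
  rewrite /Zs (bigD1 k) //= lerDl; apply: sumr_ge0 => i _; apply: expR_ge0.
have H2 : - eta * G k <= ln (Zs G).
  by rewrite -[X in X <= _]expRK ler_ln ?posrE ?expR_gt0.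
rewrite /Pot ler_pdivrMr // mulrC; lra.
Qed.

Lemma Pot_le_dot (G u : 'I_K -> R) : (forall k, 0 <= u k) -> \sum_k u k = 1 ->
  Pot G <= dot u G.
Proof.
move=> u0 su.
rewrite -[Pot G]mul1r -su mulr_suml /dot; apply: ler_sum => k _.
by apply: ler_wpM2l => //; apply: Pot_le.
Qed.

Lemma Pot0 : Pot (fun _ => 0) = - ln K%:R / eta.
Proof.
rewrite /Pot /Zs (eq_bigr (fun _ => 1)); last by move=> k _; rewrite mulr0 expR0.
by rewrite sumr_const card_ord.
Qed.

Lemma div8 (e a b : R) : e ^+ 2 <= 2 * b ^+ 2 + 2 * a ^+ 2 ->
  e ^+ 2 / (8 * eta) <= b ^+ 2 / (4 * eta) + a ^+ 2 / (4 * eta).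
Proof.
move=> H; have en := lt0r_neq0 eta0.
have -> : b ^+ 2 / (4 * eta) + a ^+ 2 / (4 * eta) = (2 * b ^+ 2 + 2 * a ^+ 2) / (8 * eta) by field.
by apply: ler_wpM2r => //; rewrite invr_ge0 mulr_ge0 // ltW.
Qed.

Lemma div42 (b : R) : b ^+ 2 / (4 * eta) <= b ^+ 2 / (2 * eta).
Proof.
apply: ler_wpM2l; first exact: sqr_ge0.
by rewrite lef_pV2 ?posrE ?mulr_gt0 // ler_pM2r // ler_nat.
Qed.

Section Omwu.
Variable l : nat -> 'I_K -> R.
Hypothesis l0 : forall k, l 0%N k = 0.
Definition cum (i : nat) := fun k => \sum_(s < i) l s.+1 k.
Definition xs (i : nat) := gb (fun k => cum i.-1 k + l i.-1 k).
Definition gs (i : nat) := gb (cum i).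

Lemma omwu_inv n :
  \sum_(i < n) (dot (l i.+1) (xs i.+1) + n1 (fun k => xs i.+1 k - xs i k) ^+ 2 / (8 * eta))
  + n1 (fun k => xs n k - gs n k) ^+ 2 / (4 * eta)
  <= Pot (cum n) - Pot (cum 0) + eta * \sum_(i < n) ninf (fun k => l i.+1 k - l i k) ^+ 2.
Proof.
elim: n => [|n IH].
  rewrite !big_ord0 mulr0 subrr addr0 add0r.
  have -> : xs 0 = gs 0.
    rewrite /xs /gs; apply: gb_ext => k.
    by rewrite l0 addr0.
  rewrite (_ : n1 _ = 0); first by rewrite expr0n /= mul0r.
  by rewrite /n1 big1 // => k _; rewrite subrr normr0.
have st := @step (cum n) (l n) (l n.+1) (xs n.+1) (gs n.+1) (gs n) erefl _ erefl.
have st2 : gs n.+1 = gb (fun k => cum n k + l n.+1 k).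
  by rewrite /gs; apply: gb_ext => k; rewrite /cum big_ord_recr.
have st3 := st st2; clear st.
have Ecum : Pot (fun k => cum n k + l n.+1 k) = Pot (cum n.+1).
  by congr Pot; apply: funext => k; rewrite /cum big_ord_recr.
rewrite Ecum in st3.
set e := n1 (fun k => xs n.+1 k - xs n k).
set a := n1 (fun k => xs n k - gs n k) in IH.
set b := n1 (fun k => xs n.+1 k - gs n k) in st3.
have tri : e <= b + a.
  have -> : a = n1 (fun k => gs n k - xs n k).
    by rewrite /a /n1; apply: eq_bigr => k _; rewrite distrC.
  apply: le_trans (n1_triangle _ _).
  by rewrite /e /n1 le_eqVlt; apply/orP; left; apply/eqP; apply: eq_bigr => k _; rewrite subrKA.
have e0 : 0 <= e by apply: n1_ge0.
have a0 : 0 <= a by apply: n1_ge0.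
have b0 : 0 <= b by apply: n1_ge0.
have sq : e ^+ 2 <= 2 * b ^+ 2 + 2 * a ^+ 2.
  have : e ^+ 2 <= (b + a) ^+ 2 by rewrite ler_sqr // ?nnegrE //; lra.
  have : 0 <= (b - a) ^+ 2 by apply: sqr_ge0.
  rewrite sqrrB sqrrD; lra.
have D8 := div8 sq.
have D42 := div42 b.
rewrite big_ord_recr /= [X in _ <= _ + eta * X]big_ord_recr /=.
rewrite mulrDr.
rewrite -/e; lra.
Qed.
Lemma omwu n (u : 'I_K -> R) : (forall k, 0 <= u k) -> \sum_k u k = 1 ->
  \sum_(i < n) dot (l i.+1) (fun k => xs i.+1 k - u k)
  <= ln K%:R / eta + eta * \sum_(i < n) ninf (fun k => l i.+1 k - l i k) ^+ 2
     - (8 * eta)^-1 * \sum_(i < n) n1 (fun k => xs i.+1 k - xs i k) ^+ 2.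
Proof.
move=> u0 su.
have I := omwu_inv n.
rewrite big_split /= in I.
have c0 : cum 0 = fun _ => 0 by apply: funext => k; rewrite /cum big_ord0.
rewrite c0 Pot0 in I.
have P := Pot_le_dot (cum n) u0 su.
have Ed : dot u (cum n) = \sum_(i < n) dot u (l i.+1).
  rewrite /dot /cum; under eq_bigr do rewrite mulr_sumr.
  by rewrite exchange_big.
have El : \sum_(i < n) dot (l i.+1) (fun k => xs i.+1 k - u k) =
          \sum_(i < n) dot (l i.+1) (xs i.+1) - \sum_(i < n) dot u (l i.+1).
  rewrite -sumrB; apply: eq_bigr => i _.
  rewrite /dot -sumrB; apply: eq_bigr => k _; ring.
have E8 : \sum_(i < n) n1 (fun k => xs i.+1 k - xs i k) ^+ 2 / (8 * eta) =
          (8 * eta)^-1 * \sum_(i < n) n1 (fun k => xs i.+1 k - xs i k) ^+ 2.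
  by rewrite mulr_sumr; apply: eq_bigr => i _; rewrite mulrC.
rewrite E8 in I.
have a0 : 0 <= n1 (fun k => xs n k - gs n k) ^+ 2 / (4 * eta).
  by apply: divr_ge0; [apply: sqr_ge0| rewrite mulr_ge0 // ltW].
have E0 : - (- ln K%:R / eta) = ln K%:R / eta by rewrite mulNr opprK.
rewrite El; rewrite Ed in P; lra.
Qed.

End Omwu.

End Gibbs2.

Section Game.
Variable R : realType.
Variables (J K d : nat) (j : 'I_J).
Implicit Types (phij : {ffun 'I_J -> 'I_K} -> 'cV[R]_d) (V : 'I_J -> 'cV[R]_K).

Definition Pm V (a : {ffun 'I_J -> 'I_K}) := \prod_(i < J | i != j) V i (a i) 0.

Lemma prod_with_j (v : 'cV[R]_K) V (a : {ffun 'I_J -> 'I_K}) :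
  \prod_(i < J) with_j j v V i (a i) 0 = v (a j) 0 * Pm V a.
Proof.
rewrite (bigD1 j) //= /with_j eqxx; congr (_ * _).
by apply: eq_bigr => i /negbTE ->.
Qed.

Lemma PhiT_entry phij V (z : 'cV[R]_d) k :
  ((PhiM j phij V)^T *m z) k 0 = \sum_(a : {ffun 'I_J -> 'I_K} | a j == k) Pm V a * dotc z (phij a).
Proof.
rewrite mxE.
under eq_bigr do rewrite mxE mxE big_distrl /=.
rewrite exchange_big /=; apply: eq_bigr => a _.
rewrite /dotc mulr_sumr; apply: eq_bigr => l _; rewrite /Pm; ring.
Qed.

Lemma cost_lin phij (v : 'cV[R]_K) V (z : 'cV[R]_d) :
  cost phij (with_j j v V) z = \sum_k v k 0 * ((PhiM j phij V)^T *m z) k 0.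
Proof.
rewrite /cost (partition_big (fun a : {ffun 'I_J -> 'I_K} => a j) xpredT) //=.
apply: eq_bigr => k _; rewrite PhiT_entry mulr_sumr.
apply: eq_bigr => a /eqP ak; rewrite prod_with_j ak; ring.
Qed.

Lemma Pm_ge0 V (a : {ffun 'I_J -> 'I_K}) : (forall i, i != j -> simplex (V i)) -> 0 <= Pm V a.
Proof. by move=> H; apply: prodr_ge0 => i ij; case: (H i ij). Qed.

Lemma Pm_sum V k : (forall i, i != j -> simplex (V i)) ->
  \sum_(a : {ffun 'I_J -> 'I_K} | a j == k) Pm V a = 1.
Proof.
move=> H.
pose U := fun (i : 'I_J) (l : 'I_K) => if i == j then ((l == k)%:R : R) else V i l 0.
have E1 : \prod_(i < J) \sum_(l < K) U i l = 1.
  apply: big1 => i _; rewrite /U; case: eqP => [_|/eqP ij].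
    by rewrite (bigD1 k) //= eqxx big1 ?addr0 // => l /negbTE ->.
  by case: (H i ij).
rewrite bigA_distr_bigA /= in E1.
rewrite -E1 big_mkcond /=; apply: eq_bigr => a _.
rewrite (bigD1 j) //= {1}/U eqxx; case: eqP => _; last by rewrite mul0r.
rewrite mul1r /Pm; apply: eq_bigr => i /negbTE ij; by rewrite /U ij.
Qed.

Lemma ell_bound phij V (z : 'cV[R]_d) k : (forall i, i != j -> simplex (V i)) ->
  (forall a, `|dotc z (phij a)| <= 1) -> `|((PhiM j phij V)^T *m z) k 0| <= 1.
Proof.
move=> H B; rewrite PhiT_entry -(Pm_sum k H).
apply: le_trans (ler_norm_sum _ _ _) _; apply: ler_sum => a _.
rewrite normrM ger0_norm ?Pm_ge0 //.
by rewrite -[X in _ <= X]mulr1; apply: ler_wpM2l; [exact: Pm_ge0|].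
Qed.
End Game.

Section State.
Variable R : realType.
Variables (K d m : nat) (eta : R) (zs : 'I_m -> 'cV[R]_d) (Z : nat -> 'I_m)
  (Phi : nat -> 'M[R]_(d, K)).

Lemma occS t z : occ Z t.+1 z = occ Z t z ++ (if Z t == z then [:: t] else [::]).
Proof. by rewrite /occ -addn1 iotaD filter_cat /= add0n; case: ifP. Qed.

Lemma state_eq t z :
  (pomwu_state eta zs Z Phi t).1 z =
    \col_k (K%:R^-1 * expR (- eta * \sum_(s <- occ Z t z) ((Phi s)^T *m zs z) k 0))
  /\ (pomwu_state eta zs Z Phi t).2 z =
    (if occ Z t z is [::] then 0 else Phi (last 0%N (occ Z t z))).
Proof.
elim: t z => [|t IH] z.
  split => //=; apply/matrixP => k l; rewrite !mxE big_nil mulr0 expR0 mulr1.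
  by [].
rewrite occS /=; case: (eqVneq z (Z t)) => [->|nz].
  have [IH1 IH2] := IH (Z t).
  rewrite ?eqxx; split.
    apply/matrixP => k l; rewrite (ord1 l) [LHS]mxE [RHS]mxE IH1 mxE big_cat big_seq1 /=.
    rewrite mulrDr expRD; ring.
  by case: (occ Z t (Z t)) => [|a s] //=; rewrite last_cat.
have [IH1 IH2] := IH z.
by rewrite cats0.
Qed.

Variable Zhat : nat -> 'I_m.
Hypothesis K0 : (0 < K)%N.

Definition stA t z := fun l => \sum_(s <- occ Z t z) ((Phi s)^T *m zs z) l 0.
Definition stM t z := fun l => (((pomwu_state eta zs Z Phi t).2 z)^T *m zs z) l 0.

Lemma play_eq t k : pomwu_play eta zs Z Zhat Phi t k 0 =
  gb eta (fun l => stA t (Zhat t) l + stM t (Zhat t) l) k.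
Proof.
have [S1 _] := state_eq t (Zhat t).
rewrite /pomwu_play /= mxE mxE S1 mxE.
under eq_bigr do rewrite mxE mxE.
have e : forall l, K%:R^-1 * expR (- eta * stA t (Zhat t) l) * expR (- eta * stM t (Zhat t) l)
   = K%:R^-1 * expR (- eta * (stA t (Zhat t) l + stM t (Zhat t) l)).
  by move=> l; rewrite mulrDr expRD mulrA.
rewrite /stA /stM in e.
rewrite e; under eq_bigr do rewrite e.
rewrite -mulr_sumr.
have Kn : (K%:R : R) != 0 by rewrite pnatr_eq0 -lt0n.
have Zn := lt0r_neq0 (Zs_gt0 K0 eta (fun l => stA t (Zhat t) l + stM t (Zhat t) l)).
rewrite /Zs /stA /stM in Zn.
rewrite /gb /Zs /stA /stM.
field. by rewrite Kn Zn.
Qed.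
End State.

Section Occ.
Variable R : realType.
Variables (m : nat) (Z : nat -> 'I_m).

Lemma occ_nth T z i : (i < size (occ Z T z))%N ->
  Z (nth 0%N (occ Z T z) i) = z /\ (nth 0%N (occ Z T z) i < T)%N /\
  size (occ Z (nth 0%N (occ Z T z) i) z) = i /\
  (forall s, (s < i)%N -> nth 0%N (occ Z (nth 0%N (occ Z T z) i) z) s = nth 0%N (occ Z T z) s).
Proof.
move=> hi.
set t := nth 0%N (occ Z T z) i.
have tin : t \in occ Z T z by apply: mem_nth.
move: (tin); rewrite /occ mem_filter mem_iota add0n => /andP[/eqP Zt /andP[_ tT]].
have dec : occ Z T z = occ Z t z ++ [seq s <- iota t (T - t) | Z s == z].
  by rewrite /occ -{1}(subnKC (ltnW tT)) iotaD filter_cat add0n.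
have ind : index t (occ Z T z) = i.
  exact: (index_uniq 0%N hi (filter_uniq _ (iota_uniq 0 T))).
have tnot : t \notin occ Z t z.
  by rewrite /occ mem_filter mem_iota add0n ltnn !andbF.
have hsz : size (occ Z t z) = i.
  move: ind; rewrite dec index_cat (negbTE tnot).
  have -> : (T - t = (T - t).-1.+1)%N by rewrite prednK // subn_gt0.
  by rewrite /= Zt eqxx /= eqxx addn0.
do 3 (split => //).
move=> s si; rewrite -!/(occ Z _ z) [in RHS]dec nth_cat hsz si //.
Qed.

Lemma regroup (F : nat -> R) T : \sum_(t < T) F t =
  \sum_(z < m) \sum_(i < size (occ Z T z)) F (nth 0%N (occ Z T z) i).
Proof.
have E : forall z, \sum_(i < size (occ Z T z)) F (nth 0%N (occ Z T z) i) =
                 \sum_(s <- iota 0 T) (if Z s == z then F s else 0).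
  move=> z; rewrite -big_mkcond -big_filter -/(occ Z T z).
  by rewrite (big_nth 0%N) big_mkord.
under [RHS]eq_bigr do rewrite E.
rewrite exchange_big /= -(big_mkord xpredT F) /index_iota subn0.
apply: eq_bigr => s _.
rewrite -big_mkcond /= (eq_bigl (fun z => z == Z s)); last by move=> z; rewrite eq_sym.
by rewrite big_pred1_eq.
Qed.
End Occ.

Section Main.
Variable R : realType.
Variables (J K d m T : nat) (j : 'I_J) (phi : 'I_J -> {ffun 'I_J -> 'I_K} -> 'cV[R]_d)
  (zs : 'I_m -> 'cV[R]_d) (Z Zhat : nat -> 'I_m) (W : nat -> 'I_J -> 'cV[R]_K) (eta : R).
Hypothesis K0 : (0 < K)%N.
Hypothesis bnd : forall (i : 'I_J) (a : {ffun 'I_J -> 'I_K}) (z : 'I_m), `|dotc (zs z) (phi i a)| <= 1.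
Hypothesis Wsimp : forall (t : nat) (i : 'I_J), i != j -> simplex (W t i).
Hypothesis eta0 : 0 < eta.

Definition Ph t := PhiM j (phi j) (W t).
Definition ww := pomwu_play eta zs Z Zhat Ph.
Definition lz (z : 'I_m) (i : nat) := fun k => ((PhiZ Ph Z T z i)^T *m zs z) k 0.
Definition occT z := occ Z T z.
Definition tt z i := nth 0%N (occT z) i.
Definition mi z i : R := (Zhat (tt z i) != z)%:R.

Lemma lz0 z k : lz z 0 k = 0.
Proof. by rewrite /lz /= trmx0 mul0mx mxE. Qed.

Lemma ww_gt0 t k : 0 < ww t k 0.
Proof. by rewrite /ww play_eq //; apply: gb_gt0. Qed.

Lemma ww_sum t : \sum_k ww t k 0 = 1.
Proof. by rewrite /ww; under eq_bigr do rewrite play_eq //; apply: gb_sum. Qed.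

Lemma ell_le1 t z k : `|((Ph t)^T *m zs z) k 0| <= 1.
Proof. by apply: ell_bound; [exact: Wsimp | move=> a; exact: bnd]. Qed.

Lemma ww_xs z i k : (i < size (occT z))%N -> Zhat (tt z i) = z ->
  ww (tt z i) k 0 = xs eta (lz z) i.+1 k.
Proof.
move=> hi hz.
have [Zt [tT [hsz hnth]]] := occ_nth hi.
rewrite -/(occT z) -/(tt z i) in Zt tT hsz hnth.
rewrite /ww play_eq // hz /xs /=.
apply: (congr1 (fun G => gb eta G k)); apply: funext => l.
congr (_ + _).
  rewrite /stA /cum (big_nth 0%N) hsz big_mkord; apply: eq_bigr => s _.
  by rewrite hnth.
rewrite /stM; have [_ ->] := state_eq eta zs Z Ph (tt z i) z.
clear hz Zt tT; move: hsz hnth; case: i hi => [|i] hi.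
  by case: (occ Z (tt z 0) z) => //= _ _; rewrite -/(lz z 0) lz0 trmx0 mul0mx mxE.
case E: (occ Z (tt z i.+1) z) => [|a s] // hsz hnth.
rewrite -nth_last hsz /= hnth //.
Qed.

Definition nz z := size (occT z).
Definition wf z i := fun k => wZ ww Z T z i k 0.
Definition Dz z := \sum_(i < nz z) ninf (fun k => lz z i.+1 k - lz z i k) ^+ 2.
Definition Xz z := \sum_(i < nz z) n1 (fun k => xs eta (lz z) i.+1 k - xs eta (lz z) i k) ^+ 2.
Definition Wz z := \sum_(i < nz z) n1 (fun k => wf z i.+1 k - wf z i k) ^+ 2.
Definition Mz z := \sum_(i < nz z) mi z i.

Lemma dotC (a b : 'I_K -> R) : dot a b = dot b a.
Proof. by rewrite /dot; apply: eq_bigr => k _; rewrite mulrC. Qed.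

Lemma dotB (l a b : 'I_K -> R) : dot l (fun k => a k - b k) = dot l a - dot l b.
Proof. by rewrite /dot -sumrB; apply: eq_bigr => k _; ring. Qed.

Lemma n1_diff2 (p q : 'I_K -> R) : (forall k, 0 <= p k) -> (forall k, 0 <= q k) ->
  \sum_k p k = 1 -> \sum_k q k = 1 -> n1 (fun k => p k - q k) <= 2.
Proof.
move=> p0 q0 sp sq.
apply: le_trans (n1_triangle p (fun k => - q k)) _.
rewrite /n1 (eq_bigr _ (fun k _ => ger0_norm (p0 k))).
rewrite (eq_bigr _ (fun k _ => normrN (q k))) (eq_bigr _ (fun k _ => ger0_norm (q0 k))).
by rewrite sp sq.
Qed.

Lemma n1_diff2sq (p q : 'I_K -> R) : (forall k, 0 <= p k) -> (forall k, 0 <= q k) ->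
  \sum_k p k = 1 -> \sum_k q k = 1 -> n1 (fun k => p k - q k) ^+ 2 <= 4.
Proof.
move=> p0 q0 sp sq; have H := n1_diff2 p0 q0 sp sq.
have H0 := n1_ge0 (fun k => p k - q k).
have -> : (4 : R) = 2 ^+ 2 by rewrite expr2; lra.
by rewrite ler_sqr ?nnegrE //; lra.
Qed.

Lemma xs_ge0 z i k : 0 <= xs eta (lz z) i k.
Proof. by apply: ltW; apply: gb_gt0. Qed.
Lemma xs_sum z i : \sum_k xs eta (lz z) i k = 1.
Proof. by apply: gb_sum. Qed.

Lemma xs0 z k : xs eta (lz z) 0 k = K%:R^-1.
Proof.
rewrite /xs /gb /Zs /= /cum.
rewrite [X in _ / X](eq_bigr (fun _ => 1)); last by move=> l _ /=; rewrite big_ord0 lz0 addr0 mulr0 expR0.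
by rewrite big_ord0 lz0 addr0 mulr0 expR0 sumr_const card_ord div1r.
Qed.

Lemma wf_ge0 z i k : 0 <= wf z i k.
Proof.
rewrite /wf; case: i => [|i] /=; last exact: ltW (ww_gt0 _ _).
by rewrite mxE invr_ge0 ler0n.
Qed.

Lemma wf_sum z i : \sum_k wf z i k = 1.
Proof.
rewrite /wf; case: i => [|i] /=; last exact: ww_sum.
under eq_bigr do rewrite mxE.
rewrite sumr_const card_ord -[_ *+ _]mulr_natr mulVf //.
by rewrite pnatr_eq0 -lt0n.
Qed.

Lemma lz_ninf z i : ninf (lz z i.+1) <= 1.
Proof.
by apply: ninf_le => // k; rewrite /lz /=; apply: ell_le1.
Qed.

Lemma mi01 z i : mi z i = 0 \/ mi z i = 1.
Proof. by rewrite /mi; case: (_ != _); [right|left]. Qed.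
Lemma mi_ge0 z i : 0 <= mi z i.
Proof. by rewrite /mi ler0n. Qed.

Lemma partA z (u : 'I_K -> R) : (forall k, 0 <= u k) -> \sum_k u k = 1 ->
  \sum_(i < nz z) dot (lz z i.+1) (fun k => ww (tt z i) k 0 - u k)
  <= ln K%:R / eta + eta * Dz z - (8 * eta)^-1 * Xz z + 2 * Mz z.
Proof.
move=> u0 su.
have O := omwu K0 eta0 (lz0 z) (nz z) u0 su.
have E : \sum_(i < nz z) dot (lz z i.+1) (fun k => ww (tt z i) k 0 - u k) =
  \sum_(i < nz z) dot (lz z i.+1) (fun k => xs eta (lz z) i.+1 k - u k)
  + \sum_(i < nz z) dot (lz z i.+1) (fun k => ww (tt z i) k 0 - xs eta (lz z) i.+1 k).
  rewrite -big_split /=; apply: eq_bigr => i _; rewrite !dotB; ring.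
have B : \sum_(i < nz z) dot (lz z i.+1) (fun k => ww (tt z i) k 0 - xs eta (lz z) i.+1 k)
         <= 2 * Mz z.
  rewrite /Mz mulr_sumr; apply: ler_sum => i _.
  rewrite /mi; case: eqP => [hz|hz] /=.
    rewrite mulr0 (_ : dot _ _ = 0) //.
    rewrite /dot big1 // => k _; rewrite ww_xs // ?subrr ?mulr0 //.
  rewrite mulr1 dotC.
  apply: le_trans (holder _ _) _.
  have h1 := lz_ninf z i.
  have h2 : n1 (fun k => ww (tt z i) k 0 - xs eta (lz z) i.+1 k) <= 2.
    apply: n1_diff2; [move=> k; exact: ltW (ww_gt0 _ _)| exact: xs_ge0 | exact: ww_sum| exact: xs_sum].
  have h3 := n1_ge0 (fun k => ww (tt z i) k 0 - xs eta (lz z) i.+1 k).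
  have h4 := ninf_ge0 (lz z i.+1).
  nra.
rewrite E /Dz /Xz; lra.
Qed.

Definition pv z i := if i is i'.+1 then mi z i' else 0.

Lemma pv_ge0 z i : 0 <= pv z i.
Proof. by case: i => [|i] //=; apply: mi_ge0. Qed.

Lemma pv_sum z n : \sum_(i < n) pv z i <= \sum_(i < n) mi z i.
Proof.
case: n => [|n]; first by rewrite !big_ord0.
rewrite big_ord_recl /= add0r big_ord_recr /=.
have := mi_ge0 z n; set S := \sum_(i < n) _; lra.
Qed.

Lemma termB z i : (i < nz z)%N ->
  n1 (fun k => wf z i.+1 k - wf z i k) ^+ 2 <=
  n1 (fun k => xs eta (lz z) i.+1 k - xs eta (lz z) i k) ^+ 2 + 4 * mi z i + 4 * pv z i.
Proof.
move=> hi.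
have m0 := mi_ge0 z i; have p0 := pv_ge0 z i.
have X0 := sqr_ge0 (n1 (fun k => xs eta (lz z) i.+1 k - xs eta (lz z) i k)).
have [H|H] : (wf z i.+1 = xs eta (lz z) i.+1 /\ wf z i = xs eta (lz z) i)
             \/ 1 <= mi z i + pv z i.
  case hz: (Zhat (tt z i) == z); last first.
    by right; rewrite /mi hz /=; lra.
  move/eqP: hz => hz.
  case: i hi m0 p0 X0 hz => [|i] hi m0 p0 X0 hz.
    left; split; apply: funext => k; first by rewrite /wf /= ww_xs.
    by rewrite /wf /= mxE xs0.
  case hz': (Zhat (tt z i) == z); last first.
    by right; rewrite /pv /mi hz' /=; lra.
  move/eqP: hz' => hz'.
  left; split; apply: funext => k; first by rewrite /wf /= ww_xs.
  by rewrite /wf /= ww_xs // ltnW.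
  case: H => -> ->; lra.
have W4 : n1 (fun k => wf z i.+1 k - wf z i k) ^+ 2 <= 4.
  by apply: n1_diff2sq; [exact: wf_ge0| exact: wf_ge0| exact: wf_sum| exact: wf_sum].
lra.
Qed.

Lemma partB z : Wz z <= Xz z + 8 * Mz z.
Proof.
have E : Xz z + 8 * Mz z = \sum_(i < nz z) (n1 (fun k => xs eta (lz z) i.+1 k - xs eta (lz z) i k) ^+ 2
            + 4 * mi z i + 4 * pv z i) + 4 * (\sum_(i < nz z) mi z i - \sum_(i < nz z) pv z i).
  rewrite /Xz /Mz !big_split /= -!mulr_sumr; ring.
have := pv_sum z (nz z).
rewrite E => Hp.
have : Wz z <= \sum_(i < nz z) (n1 (fun k => xs eta (lz z) i.+1 k - xs eta (lz z) i k) ^+ 2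
            + 4 * mi z i + 4 * pv z i).
  by rewrite /Wz; apply: ler_sum => i _; apply: termB.
lra.
Qed.

Lemma partC z (u : 'I_K -> R) : (forall k, 0 <= u k) -> \sum_k u k = 1 ->
  \sum_(i < nz z) dot (lz z i.+1) (fun k => ww (tt z i) k 0 - u k)
  <= ln K%:R / eta + eta * Dz z - (16 * eta)^-1 * Wz z + (eta^-1 + 2) * Mz z.
Proof.
move=> u0 su.
have A := partA z u0 su.
have B := partB z.
have W0 : 0 <= Wz z by apply: sumr_ge0 => i _; apply: sqr_ge0.
have e8 : 0 <= (8 * eta)^-1 by rewrite invr_ge0 mulr_ge0 // ltW.
have B2 : (8 * eta)^-1 * Wz z <= (8 * eta)^-1 * Xz z + (8 * eta)^-1 * (8 * Mz z).
  by rewrite -mulrDr; apply: ler_wpM2l.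
have en := lt0r_neq0 eta0.
have E1 : (8 * eta)^-1 * (8 * Mz z) = eta^-1 * Mz z by field.
have E2 : (8 * eta)^-1 * Wz z = (16 * eta)^-1 * Wz z + (16 * eta)^-1 * Wz z by field.
have W16 : 0 <= (16 * eta)^-1 * Wz z by apply: mulr_ge0 => //; rewrite invr_ge0 mulr_ge0 // ltW.
rewrite E1 E2 in B2.
rewrite [(_ + 2) * _]mulrDl; lra.
Qed.

Lemma Dz_eq z : \sum_(1 <= i < (nz z).+1)
    normInf ((PhiZ Ph Z T z i - PhiZ Ph Z T z i.-1)^T *m zs z) ^+ 2 = Dz z.
Proof.
rewrite big_add1 /= big_mkord /Dz; apply: eq_bigr => i _.
congr (_ ^+ 2); rewrite /normInf /ninf; apply: eq_bigr => k _.
by rewrite linearB /= mulmxBl /lz /= !mxE.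
Qed.

Lemma Wz_eq z : \sum_(1 <= i < (nz z).+1)
    norm1 (wZ ww Z T z i - wZ ww Z T z i.-1) ^+ 2 = Wz z.
Proof.
rewrite big_add1 /= big_mkord /Wz; apply: eq_bigr => i _.
congr (_ ^+ 2); rewrite /norm1 /n1; apply: eq_bigr => k _.
by rewrite /wf !mxE.
Qed.

Lemma L_eq : Lmiss R Z Zhat T = \sum_(z < m) Mz z.
Proof.
rewrite /Lmiss (regroup Z (fun t => (Zhat t != Z t)%:R : R)).
apply: eq_bigr => z _; rewrite /Mz; apply: eq_bigr => i _.
have [Zt _] := occ_nth (ltn_ord i).
by rewrite /mi /tt /occT Zt.
Qed.

Lemma diff_bound (pi : 'I_m -> 'cV[R]_K) : (forall z, simplex (pi z)) ->
  \sum_(t < T) cost (phi j) (with_j j (ww t) (W t)) (zs (Z t))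
  - \sum_(t < T) cost (phi j) (with_j j (pi (Z t)) (W t)) (zs (Z t))
  <= \sum_(z < m) (ln K%:R / eta + eta * Dz z - (16 * eta)^-1 * Wz z + (eta^-1 + 2) * Mz z).
Proof.
move=> hpi.
rewrite -sumrB.
rewrite (eq_bigr (fun t : 'I_T => dot (fun k => ww t k 0 - pi (Z t) k 0)
                   (fun k => ((Ph t)^T *m zs (Z t)) k 0))); last first.
  move=> t _; rewrite !cost_lin /dot -sumrB; apply: eq_bigr => k _; rewrite /Ph; ring.
rewrite (regroup Z (fun t => dot (fun k => ww t k 0 - pi (Z t) k 0)
                   (fun k => ((Ph t)^T *m zs (Z t)) k 0))).
apply: ler_sum => z _.
have [u0 su] := hpi z.
apply: le_trans (@partC z (fun k => pi z k 0) u0 su).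
rewrite le_eqVlt; apply/orP; left; apply/eqP.
apply: eq_bigr => i _.
have [Zt _] := occ_nth (ltn_ord i).
rewrite -/(occT z) -/(tt z i) in Zt *.
by rewrite dotC Zt.
Qed.

Lemma eta_ineq : 2 <= 4 * eta^-1 + 4 * eta.
Proof.
have x0 : 0 < eta^-1 by rewrite invr_gt0.
have h : eta^-1 * eta = 1 by rewrite mulVf // lt0r_neq0.
nra.
Qed.

Lemma main_bound : regret j (phi j) zs Z W ww T <=
    ((5 + ln K%:R) * Lmiss R Z Zhat T + m%:R * ln K%:R) / eta
    + eta * (\sum_(z < m) \sum_(1 <= i < (nz z).+1)
               normInf ((PhiZ Ph Z T z i - PhiZ Ph Z T z i.-1)^T *m zs z) ^+ 2
             + 4 * Lmiss R Z Zhat T)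
    - (16 * eta)^-1 * \sum_(z < m) \sum_(1 <= i < (nz z).+1)
               norm1 (wZ ww Z T z i - wZ ww Z T z i.-1) ^+ 2.
Proof.
under eq_bigr do rewrite Dz_eq.
under [X in _ - _ * X]eq_bigr do rewrite Wz_eq.
set B := \sum_(z < m) (ln K%:R / eta + eta * Dz z - (16 * eta)^-1 * Wz z + (eta^-1 + 2) * Mz z).
have HB : \sum_(t < T) cost (phi j) (with_j j (ww t) (W t)) (zs (Z t)) - B <=
  inf [set \sum_(t < T) cost (phi j) (with_j j (pi (Z t)) (W t)) (zs (Z t))
         | pi in [set pi : 'I_m -> 'cV[R]_K | forall z, simplex (pi z)]].
  apply: lb_le_inf.
    exists (\sum_(t < T) cost (phi j) (with_j j (unif R K) (W t)) (zs (Z t))).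
    exists (fun _ => unif R K) => //= z; split.
      by move=> k; rewrite mxE invr_ge0 ler0n.
    under eq_bigr do rewrite mxE.
    rewrite sumr_const card_ord -[_ *+ _]mulr_natr mulVf //.
    by rewrite pnatr_eq0 -lt0n.
  move=> y [pi hpi <-].
  have := diff_bound hpi; rewrite -/B; lra.
have Eb : B = m%:R * (ln K%:R / eta) + eta * \sum_(z < m) Dz z
             - (16 * eta)^-1 * \sum_(z < m) Wz z + (eta^-1 + 2) * \sum_(z < m) Mz z.
  rewrite /B !big_split /= sumrN sumr_const card_ord -!mulr_sumr -mulr_natl; ring.
rewrite -L_eq in Eb.
have L0 : 0 <= Lmiss R Z Zhat T by apply: sumr_ge0 => t _; apply: ler0n.
have lK : 0 <= ln (K%:R : R) by apply: ln_ge0; rewrite ler1n.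
have key : 0 <= Lmiss R Z Zhat T * (4 * eta^-1 + ln K%:R * eta^-1 + 4 * eta - 2).
  apply: mulr_ge0 => //.
  have := eta_ineq; have : 0 <= ln K%:R * eta^-1 by apply: mulr_ge0 => //; rewrite invr_ge0 ltW.
  lra.
rewrite /regret.
set L := Lmiss R Z Zhat T in Eb L0 key *.
set SD := \sum_(z < m) Dz z in Eb *.
set SW := \sum_(z < m) Wz z in Eb *.
set C := \sum_(t < T) cost (phi j) (with_j j (ww t) (W t)) (zs (Z t)) in HB *.
set I := inf _ in HB *.
have Ediff : ((5 + ln K%:R) * L + m%:R * ln K%:R) / eta + eta * (SD + 4 * L) - (16 * eta)^-1 * SW
   - B = L * (4 * eta^-1 + ln K%:R * eta^-1 + 4 * eta - 2).
  by rewrite Eb; ring.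
lra.
Qed.
End Main.

Local Close Scope classical_set_scope.
Unset Implicit Arguments.

Theorem proposition5 (R : realType) (J K d m T : nat) (j : 'I_J)
  (phi : 'I_J -> {ffun 'I_J -> 'I_K} -> 'cV[R]_d)
  (zs : 'I_m -> 'cV[R]_d) (Z Zhat : nat -> 'I_m)
  (W : nat -> 'I_J -> 'cV[R]_K) (eta : R) :
  (0 < K)%N ->
  injective zs ->
  (forall (i : 'I_J) (a : {ffun 'I_J -> 'I_K}) (z : 'I_m), `|dotc (zs z) (phi i a)| <= 1) ->
  (forall (t : nat) (i : 'I_J), i != j -> simplex (W t i)) ->
  0 < eta ->
  let Phi := fun t => PhiM j (phi j) (W t) in
  let w := pomwu_play eta zs Z Zhat Phi in
  let L := Lmiss R Z Zhat T in
  let n := fun z => size (occ Z T z) in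
  regret j (phi j) zs Z W w T <=
    ((5 + ln K%:R) * L + m%:R * ln K%:R) / eta
    + eta * (\sum_(z < m) \sum_(1 <= i < (n z).+1)
               normInf ((PhiZ Phi Z T z i - PhiZ Phi Z T z i.-1)^T *m zs z) ^+ 2
             + 4 * L)
    - (16 * eta)^-1 * \sum_(z < m) \sum_(1 <= i < (n z).+1)
               norm1 (wZ w Z T z i - wZ w Z T z i.-1) ^+ 2.
Proof.
move=> K0 zinj bnd Wsimp eta0.
exact: (@main_bound R J K d m T j phi zs Z Zhat W eta K0 bnd Wsimp eta0).
Qed.
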